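(* Let $G$ and $H$ be Left dead-ends with $G\geq H$. Then the formal birthday of $G$ is at most the formal birthday of $H$.
   Context: Games are finite partizan games; $o(G)$ is the misère outcome class (ordered $\mathscr{L}>\mathscr{N}>\mathscr{R}$, $\mathscr{L}>\mathscr{P}>\mathscr{R}$). A universe is a set of games closed under options, disjunctive sums, conjugates, and forming $\{\mathscr{G}^L\mid\mathscr{G}^R\}$ from nonempty finite subsets of it; $G\geq_\mathcal{U}H$ means $o(G+X)\geq o(H+X)$ for all $X\in\mathcal{U}$. A Left dead-end is a game all of whose subpositions have no Left option. For Left dead-ends, $G\geq H$ means $G\geq_\mathcal{U}H$ for every universe $\mathcal{U}$. The formal birthday is the height of the game tree. *)

(* Defs.v *)
From Stdlib Require Import List Arith.
Import ListNotations.

Inductive game : Type :=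
  | Game : list game -> list game -> game.

Definition leftOpts (G : game) : list game := match G with Game gl _ => gl end.
Definition rightOpts (G : game) : list game := match G with Game _ gr => gr end.

Fixpoint add (G H : game) {struct G} : game :=
  match G with
  | Game gl gr =>
      let fix addH (H : game) : game :=
        match H with
        | Game hl hr =>
            Game (map (fun g => add g H) gl ++ map addH hl)
                 (map (fun g => add g H) gr ++ map addH hr)
        end in
      addH H
  end.

Fixpoint conj (G : game) : game :=
  match G with
  | Game gl gr => Game (map conj gr) (map conj gl)
  end.

(* Misere play: a player who cannot move wins.
   wins G = (Left wins moving first, Right wins moving first). *)
Fixpoint wins (G : game) : bool * bool :=
  match G with
  | Game gl gr =>
      ( match gl with
        | [] => true
        | _ => existsb (fun g => negb (snd (wins g))) gl
        end,
        match gr with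
        | [] => true
        | _ => existsb (fun g => negb (fst (wins g))) gr
        end )
  end.

Inductive outcome : Type := oL | oN | oP | oR.

Definition o (G : game) : outcome :=
  match wins G with
  | (true, false) => oL   (* Left wins moving first and moving second *)
  | (true, true) => oN
  | (false, false) => oP
  | (false, true) => oR
  end.

Definition outcome_le (a b : outcome) : Prop :=
  a = b \/ a = oR \/ b = oL.

Inductive subposition : game -> game -> Prop :=
  | subpos_refl G : subposition G G
  | subpos_left S G' G : In G' (leftOpts G) -> subposition S G' -> subposition S G
  | subpos_right S G' G : In G' (rightOpts G) -> subposition S G' -> subposition S G.

Definition left_dead_end (G : game) : Prop :=
  forall S, subposition S G -> leftOpts S = [].

Definition universe (U : game -> Prop) : Prop :=
  (forall G G', U G -> In G' (leftOpts G) -> U G') /\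
  (forall G G', U G -> In G' (rightOpts G) -> U G') /\
  (forall G H, U G -> U H -> U (add G H)) /\
  (forall G, U G -> U (conj G)) /\
  (forall A B : list game, A <> [] -> B <> [] ->
     Forall U A -> Forall U B -> U (Game A B)).

Definition ge_U (U : game -> Prop) (G H : game) : Prop :=
  forall X, U X -> outcome_le (o (add H X)) (o (add G X)).

Definition game_ge (G H : game) : Prop :=
  forall U, universe U -> ge_U U G H.

Fixpoint birthday (G : game) : nat :=
  match G with
  | Game gl gr =>
      Nat.max (list_max (map (fun g => S (birthday g)) gl))
              (list_max (map (fun g => S (birthday g)) gr))
  end.

(* Main.v *)
Require Import Defs.
From Stdlib Require Import List Arith Lia Bool.
Import ListNotations.

Fixpoint Xk (k : nat) : game :=
  match k with
  | 0 => Game [] []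
  | S k' => Game [Xk k'] [Game [] []]
  end.

Fixpoint haspath (G : game) (k : nat) : Prop :=
  match k with
  | 0 => rightOpts G = []
  | S k' => exists g, In g (rightOpts G) /\ haspath g k'
  end.

Lemma add_Game gl gr hl hr :
  add (Game gl gr) (Game hl hr) =
  Game (map (fun g => add g (Game hl hr)) gl ++ map (fun h => add (Game gl gr) h) hl)
       (map (fun g => add g (Game hl hr)) gr ++ map (fun h => add (Game gl gr) h) hr).
Proof. reflexivity. Qed.

Lemma snd_wins_ne gl gr : gr <> [] ->
  snd (wins (Game gl gr)) = existsb (fun g => negb (fst (wins g))) gr.
Proof. destruct gr; [congruence|reflexivity]. Qed.

Lemma fst_wins_ne gl gr : gl <> [] ->
  fst (wins (Game gl gr)) = existsb (fun g => negb (snd (wins g))) gl.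
Proof. destruct gl; [congruence|reflexivity]. Qed.

Lemma fst_wins_nil gr : fst (wins (Game [] gr)) = true.
Proof. reflexivity. Qed.

Lemma lde_nil G : left_dead_end G -> leftOpts G = [].
Proof. intros H; apply H; constructor. Qed.

Lemma lde_right G g : left_dead_end G -> In g (rightOpts G) -> left_dead_end g.
Proof. intros H Hin S HS. apply H. eapply subpos_right; eauto. Qed.

Lemma key k : forall G, left_dead_end G ->
  (snd (wins (add G (Xk k))) = true <-> haspath G k).
Proof.
  induction k as [|k IH]; intros G HG.
  - destruct G as [gl gr]. pose proof (lde_nil _ HG) as E; simpl in E; subst gl.
    simpl Xk. rewrite add_Game. simpl app. rewrite app_nil_r.
    destruct gr as [|g gr]; [simpl; tauto|].
    rewrite snd_wins_ne by discriminate. simpl haspath.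
    split; [|discriminate]. intros Hx.
    apply existsb_exists in Hx. destruct Hx as [x [Hin Hx]].
    apply in_map_iff in Hin. destruct Hin as [g' [<- Hin']].
    assert (Hg' : left_dead_end g') by (eapply lde_right; [exact HG| simpl; exact Hin']).
    destruct g' as [gl' gr']. pose proof (lde_nil _ Hg') as E'; simpl in E'; subst gl'.
    rewrite add_Game in Hx. simpl in Hx. discriminate.
  - destruct G as [gl gr]. pose proof (lde_nil _ HG) as E; simpl in E; subst gl.
    simpl Xk. rewrite add_Game. rewrite snd_wins_ne.
    2:{ intro C. apply app_eq_nil in C. destruct C as [_ C]. discriminate. }
    rewrite existsb_app. simpl map. simpl existsb at 2.
    idtac.
    rewrite orb_false_r. simpl haspath.
    rewrite existsb_exists. split.
    + intros [x [Hin Hx]]. apply in_map_iff in Hin. destruct Hin as [g [<- Hin]].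
      exists g. split; [exact Hin|].
      assert (Hg : left_dead_end g) by (eapply lde_right; [exact HG| simpl; exact Hin]).
      apply (IH g Hg).
      destruct g as [gl' gr']. pose proof (lde_nil _ Hg) as E'; simpl in E'; subst gl'.
      rewrite add_Game in Hx. simpl app in Hx. rewrite fst_wins_ne in Hx by discriminate.
      simpl in Hx. rewrite orb_false_r in Hx. rewrite negb_involutive in Hx. exact Hx.
    + intros [g [Hin Hp]]. exists (add g (Game [Xk k] [Game [] []])).
      split; [apply in_map_iff; exists g; auto|].
      assert (Hg : left_dead_end g) by (eapply lde_right; [exact HG| simpl; exact Hin]).
      apply (IH g Hg) in Hp.
      destruct g as [gl' gr']. pose proof (lde_nil _ Hg) as E'; simpl in E'; subst gl'.
      rewrite add_Game. simpl app. rewrite fst_wins_ne by discriminate.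
      simpl. rewrite orb_false_r, negb_involutive. exact Hp.
Qed.

Lemma fst_S G k : left_dead_end G ->
  fst (wins (add G (Xk (S k)))) = negb (snd (wins (add G (Xk k)))).
Proof.
  intros HG. destruct G as [gl gr]. pose proof (lde_nil _ HG) as E; simpl in E; subst gl.
  simpl Xk. rewrite add_Game. simpl app. rewrite fst_wins_ne by discriminate.
  simpl. apply orb_false_r.
Qed.

Lemma list_max_achieved l : l <> [] -> In (list_max l) l.
Proof.
  induction l as [|a l IH]; intros Hne; [congruence|].
  simpl. destruct l as [|b l'].
  - simpl. left. lia.
  - specialize (IH ltac:(discriminate)).
    destruct (Nat.max_spec a (list_max (b :: l'))) as [[_ ->]|[_ ->]]; auto.
Qed.

Lemma birthday_right g hl hr : In g hr -> S (birthday g) <= birthday (Game hl hr).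
Proof.
  intros Hin. simpl birthday.
  assert (S (birthday g) <= list_max (map (fun g => S (birthday g)) hr)).
  { pose proof (list_max_le (map (fun g => S (birthday g)) hr)
       (list_max (map (fun g => S (birthday g)) hr))) as [H1 _].
    rewrite Forall_forall in H1. apply H1; [lia|]. apply in_map_iff. eauto. }
  lia.
Qed.

Lemma haspath_birthday_aux : forall n G, birthday G <= n -> left_dead_end G -> haspath G (birthday G).
Proof.
  induction n as [|n IH]; intros [gl gr] Hb HG;
  pose proof (lde_nil _ HG) as E; simpl in E; subst gl.
  - destruct gr as [|g gr]; [reflexivity|].
    pose proof (birthday_right g [] (g::gr) (or_introl eq_refl)). lia.
  - destruct gr as [|g0 gr0] eqn:Egr; [reflexivity|].
    rewrite <- Egr in HG, Hb |- *.
    assert (Hin : In (list_max (map (fun g => S (birthday g)) gr)) (map (fun g => S (birthday g)) gr)).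
    { apply list_max_achieved. subst gr. discriminate. }
    apply in_map_iff in Hin. destruct Hin as [g [Heq Hin]].
    assert (Hbd : birthday (Game [] gr) = S (birthday g)) by (simpl; rewrite Heq; reflexivity).
    rewrite Hbd. simpl. exists g. split; [exact Hin|].
    pose proof (birthday_right g [] gr Hin).
    apply IH; [lia|]. eapply lde_right; [exact HG|exact Hin].
Qed.

Lemma haspath_birthday G : left_dead_end G -> haspath G (birthday G).
Proof. apply (haspath_birthday_aux (birthday G)); auto. Qed.

Lemma haspath_le : forall k H, haspath H k -> k <= birthday H.
Proof.
  induction k as [|k IH]; intros [hl hr] Hp; [lia|].
  destruct Hp as [g [Hin Hp]]. simpl in Hin.
  apply IH in Hp. simpl birthday.
  assert (S (birthday g) <= list_max (map (fun g => S (birthday g)) hr)).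
  { pose proof (list_max_le (map (fun g => S (birthday g)) hr)
       (list_max (map (fun g => S (birthday g)) hr))) as [H1 _].
    rewrite Forall_forall in H1. apply H1; [lia|]. apply in_map_iff. eauto. }
  lia.
Qed.

Theorem mainTheorem12 (G H : game) :
  left_dead_end G -> left_dead_end H -> game_ge G H ->
  birthday G <= birthday H.
Proof.
  intros HG HH Hge.
  destruct (le_lt_dec (birthday G) (birthday H)) as [|Hlt]; [assumption|exfalso].
  set (k := birthday G) in *.
  assert (U : universe (fun _ => True)) by (repeat split; auto).
  specialize (Hge _ U (Xk (S k)) I).
  assert (E1 : fst (wins (add G (Xk (S k)))) = false).
  { rewrite fst_S by exact HG. apply negb_false_iff.
    apply (key k G HG). apply haspath_birthday; exact HG. }
  assert (E2 : fst (wins (add H (Xk (S k)))) = true).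
  { rewrite fst_S by exact HH. apply negb_true_iff.
    destruct (snd (wins (add H (Xk k)))) eqn:Eq; [|reflexivity].
    apply (key k H HH) in Eq. apply haspath_le in Eq. lia. }
  unfold outcome_le, o in Hge.
  destruct (wins (add G (Xk (S k)))) as [a b]; destruct (wins (add H (Xk (S k)))) as [c d].
  simpl in E1, E2; subst a c.
  destruct b, d; intuition discriminate.
Qed.
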